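(* Let $X\subseteq\Omega$ be club in $\Omega$ with $0\notin X$. If $\alpha<\beta<\varepsilon_{\Omega+1}$, then $\Theta_X(\alpha)<\Theta_X(\beta)$ if and only if $\alpha^*<\Theta_X(\beta)$.
   Context: $\Omega$ is the first uncountable ordinal; $\varepsilon_{\Omega+1}$ the least $\varepsilon>\Omega$ with $\omega^\varepsilon=\varepsilon$. Every $0<\xi<\varepsilon_{\Omega+1}$ has a unique $\Omega$-normal form $\xi=\Omega^{\alpha}\beta+\gamma$ with $0<\beta<\Omega$, $\gamma<\Omega^{\alpha}$; $C(0)=\{0\}$, $C(\Omega^\alpha\beta+\gamma)=C(\alpha)\cup C(\gamma)\cup\{\beta\}$; $\xi^*=\max C(\xi)$. $\Theta_X(\xi)$ is defined by recursion on $\xi<\varepsilon_{\Omega+1}$ as the least $\theta\in X$ with $\theta>\xi^*$ such that every $\zeta<\xi$ with $\zeta^*<\theta$ satisfies $\Theta_X(\zeta)<\theta$. *)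

(* Defs.v *)
From Stdlib Require Import ClassicalEpsilon.

Set Implicit Arguments.

(** A strict well-order whose proper initial segments are all countable but
    which is itself uncountable has order type exactly omega_1 (unique up to
    a unique isomorphism).  [ozero] is its least element (the ordinal 0). *)
Record Omega1 : Type := {
  ocar :> Type;
  olt : ocar -> ocar -> Prop;
  ozero : ocar;
  olt_irrefl : forall x, ~ olt x x;
  olt_trans : forall x y z, olt x y -> olt y z -> olt x z;
  olt_total : forall x y, olt x y \/ x = y \/ olt y x;
  olt_wf : well_founded olt;
  ozero_least : forall y, ~ olt y ozero;
  olt_segment_countable :
    forall x, exists f : {y | olt y x} -> nat,
      forall u v, f u = f v -> u = v;
  olt_uncountable :
    ~ exists f : ocar -> nat, forall u v, f u = f v -> u = v
}.

Arguments olt {_} _ _.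
Arguments ozero {_}.

Section Defs.
Variable W : Omega1.

Definition unbounded (X : W -> Prop) : Prop :=
  forall a : W, exists x, X x /\ olt a x.

(** closed: every nonzero l below which X is cofinal (hence l is a limit
    and l = sup (X ∩ l)) belongs to X. *)
Definition closed (X : W -> Prop) : Prop :=
  forall l : W, (exists a, olt a l) ->
    (forall a, olt a l -> exists x, X x /\ olt a x /\ olt x l) -> X l.

Definition club (X : W -> Prop) : Prop := closed X /\ unbounded X.

(** * Ordinals below epsilon_{Omega+1}, via Omega-normal forms.
    [P a b g] denotes Omega^a * b + g. *)
Inductive oterm : Type :=
| Z : oterm
| P : oterm -> W -> oterm -> oterm.

(** ordinal comparison of terms (correct on normal forms) *)
Fixpoint tlt (x y : oterm) : Prop :=
  match x, y with
  | Z, Z => False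
  | Z, P _ _ _ => True
  | P _ _ _, Z => False
  | P a b g, P a' b' g' =>
      tlt a a' \/ (a = a' /\ (olt b b' \/ (b = b' /\ tlt g g')))
  end.

(** Omega-normal form: xi = Omega^a b + g with 0 < b < Omega, g < Omega^a,
    hereditarily. *)
Fixpoint NF (x : oterm) : Prop :=
  match x with
  | Z => True
  | P a b g =>
      NF a /\ olt ozero b /\ NF g /\
      match g with Z => True | P a' _ _ => tlt a' a end
  end.

Definition omax (x y : W) : W :=
  if excluded_middle_informative (olt x y) then y else x.

(** C(0) = {0}, C(Omega^a b + g) = C(a) ∪ C(g) ∪ {b};  star x = max C(x). *)
Fixpoint inC (x : oterm) (c : W) : Prop :=
  match x with
  | Z => c = ozero
  | P a b g => inC a c \/ inC g c \/ c = b
  end.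

Fixpoint star (x : oterm) : W :=
  match x with
  | Z => ozero
  | P a b g => omax (star a) (omax b (star g))
  end.

(** Graph of Theta_X, by the recursion: Theta_X(xi) is the least theta in X
    with theta > xi^* such that every zeta < xi with zeta^* < theta
    satisfies Theta_X(zeta) < theta. *)
Inductive Theta_rel (X : W -> Prop) : oterm -> W -> Prop :=
| Theta_intro : forall (xi : oterm) (th : W),
    X th ->
    olt (star xi) th ->
    (forall zeta, NF zeta -> tlt zeta xi -> olt (star zeta) th ->
       exists t, Theta_rel X zeta t /\ olt t th) ->
    (forall th', X th' -> olt (star xi) th' -> olt th' th ->
       exists zeta, NF zeta /\ tlt zeta xi /\ olt (star zeta) th' /\
         exists t, Theta_rel X zeta t /\ ~ olt t th') ->
    Theta_rel X xi th.

Definition Theta (X : W -> Prop) (xi : oterm) : W :=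
  epsilon (inhabits (@ozero W)) (Theta_rel X xi).

End Defs.

Arguments Z {_}.
Arguments club {_} _.
Arguments unbounded {_} _.
Arguments closed {_} _.
Arguments tlt {_} _ _.
Arguments NF {_} _.
Arguments star {_} _.
Arguments inC {_} _ _.
Arguments omax {_} _ _.
Arguments Theta {_} _ _.
Arguments Theta_rel {_} _ _ _.

(* Main.v *)
Require Import Defs.
From Stdlib Require Import ClassicalEpsilon Classical Cantor Lia.

Section S.
Variable W : Omega1.
Definition R (x y : oterm W) := NF x /\ tlt x y.

Lemma Acc_Z : Acc R Z.
Proof. constructor. intros y [_ H]. destruct y; simpl in H; contradiction. Qed.

Definition E (a : oterm W) := forall b g, NF (P a b g) -> Acc R (P a b g).

Lemma E_step : forall a, (forall a', R a' a -> E a') -> E a.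
Proof.
  intros a H b.
  induction b as [b IHb] using (well_founded_ind (olt_wf W)).
  intros g Hn.
  assert (Ag : Acc R g).
  { destruct g as [|a'' b'' g'']. apply Acc_Z.
    simpl in Hn. destruct Hn as (_ & _ & Hg & Hl).
    apply H. split. simpl in Hg; tauto. exact Hl. exact Hg. }
  revert Hn. induction Ag as [g _ IHg]. intros Hn.
  constructor. intros y [Ny Ly].
  destruct y as [|a' b' g']. apply Acc_Z.
  simpl in Ly. destruct Ly as [L|[ea [L|[eb L]]]].
  - apply H; [split; [simpl in Ny; tauto|exact L] | exact Ny].
  - subst. apply IHb; assumption.
  - subst. apply IHg. split; [simpl in Ny; tauto|exact L]. exact Ny.
Qed.

Lemma NF_Acc : forall x, NF x -> Acc R x.
Proof.
  induction x as [|a IHa b g IHg]. intros; apply Acc_Z.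
  intros Hn. assert (Aa : Acc R a) by (apply IHa; simpl in Hn; tauto).
  assert (Ea : E a).
  { clear -Aa. induction Aa as [a _ IH]. apply E_step. intros a' Ha'. apply IH; exact Ha'. }
  apply Ea; exact Hn.
Qed.
Variable X : W -> Prop.

Lemma Theta_uniq : forall xi t1, Theta_rel X xi t1 -> forall t2, Theta_rel X xi t2 -> t1 = t2.
Proof.
  fix IH 3.
  intros xi t1 H1 t2 H2.
  destruct H1 as [xi t1 X1 s1 c31 c41].
  destruct H2 as [xi t2 X2 s2 c32 c42].
  destruct (olt_total _ t1 t2) as [lt|[eq|lt]]; [|exact eq|].
  - exfalso.
    destruct (c42 t1 X1 s1 lt) as [z [nz [zl [sz [t [Ht nt]]]]]].
    destruct (c31 z nz zl sz) as [t' [Ht' lt']].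
    pose proof (IH _ _ Ht' _ Ht) as e. subst. contradiction.
  - exfalso.
    destruct (c41 t2 X2 s2 lt) as [z [nz [zl [sz [t [Ht nt]]]]]].
    destruct (c32 z nz zl sz) as [t' [Ht' lt']].
    pose proof (IH _ _ Ht _ Ht') as e. subst. contradiction.
Qed.


Lemma omax_lt : forall x y z : W, olt (omax x y) z -> olt x z /\ olt y z.
Proof.
  intros x y z. unfold omax. destruct (excluded_middle_informative (olt x y)) as [h|h]; intros H.
  - split; [eapply olt_trans; eauto|exact H].
  - split; [exact H|]. destruct (olt_total _ x y) as [l|[e|l]]; [contradiction|subst; exact H|].
    eapply olt_trans; eauto.
Qed.

Lemma seginj : forall c : W, exists G : W -> nat,
  forall x y, olt x c -> olt y c -> G x = G y -> x = y.
Proof.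
  intros c. destruct (olt_segment_countable _ c) as [e He].
  exists (fun x => match excluded_middle_informative (olt x c) with
                   | left p => e (exist _ x p) | right _ => 0 end).
  intros x y hx hy.
  destruct (excluded_middle_informative (olt x c)) as [px|]; [|contradiction].
  destruct (excluded_middle_informative (olt y c)) as [py|]; [|contradiction].
  intros h. apply He in h. exact (f_equal (@proj1_sig _ _) h).
Qed.

Definition Gs (c : W) : W -> nat :=
  epsilon (inhabits (fun _ : W => 0))
    (fun G => forall x y, olt x c -> olt y c -> G x = G y -> x = y).

Lemma Gs_spec c : forall x y, olt x c -> olt y c -> Gs c x = Gs c y -> x = y.
Proof. unfold Gs. apply epsilon_spec. apply seginj. Qed.

Lemma bounded : forall f : nat -> W, exists u, forall n, olt (f n) u.
Proof.
  intros f. apply NNPP. intros Hn.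
  assert (H : forall u, exists n, ~ olt (f n) u).
  { intros u. apply NNPP. intros h. apply Hn. exists u. intros n.
    apply NNPP. intros h'. apply h. exists n. exact h'. }
  apply (olt_uncountable W).
  set (nx := fun x : W => epsilon (inhabits 0) (fun n => ~ olt (f n) x)).
  assert (Hnx : forall x, ~ olt (f (nx x)) x).
  { intros x. unfold nx. apply epsilon_spec. apply H. }
  exists (fun x => to_nat (nx x, if excluded_middle_informative (x = f (nx x)) then 0
                              else S (Gs (f (nx x)) x))).
  intros u v huv.
  apply (f_equal of_nat) in huv. rewrite !cancel_of_to in huv.
  injection huv as e1 e2. rewrite <- e1 in e2.
  assert (Hu := Hnx u). assert (Hv := Hnx v). rewrite <- e1 in Hv.
  destruct (excluded_middle_informative (u = f (nx u))) as [a|a];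
  destruct (excluded_middle_informative (v = f (nx u))) as [b|b]; try discriminate.
  - congruence.
  - injection e2 as e2. apply (Gs_spec (f (nx u))); auto.
    + destruct (olt_total _ (f (nx u)) u) as [l|[l|l]]; [contradiction|congruence|exact l].
    + destruct (olt_total _ (f (nx u)) v) as [l|[l|l]]; [contradiction|congruence|exact l].
Qed.


Definition scov (th : W) (k : nat) : W :=
  epsilon (inhabits ozero) (fun y => olt y th /\ Gs th y = k).

Lemma scov_spec th y : olt y th -> scov th (Gs th y) = y.
Proof.
  intros hy. unfold scov.
  destruct (epsilon_spec (inhabits ozero) (fun y0 => olt y0 th /\ Gs th y0 = Gs th y)
    (ex_intro _ y (conj hy eq_refl))) as [h1 h2].
  apply (Gs_spec th); auto.
Qed.

Fixpoint enum2 (s : nat -> W) (f n : nat) : oterm W :=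
  match f with
  | 0 => Z
  | S f' => match n with
            | 0 => Z
            | S m => let (k, r) := of_nat m in let (i, j) := of_nat r in
                     P (enum2 s f' i) (s k) (enum2 s f' j)
            end
  end.

Definition enum th m := let (f, n) := of_nat m in enum2 (scov th) f n.

Lemma enum2_cover th : forall z : oterm W, olt (star z) th ->
  exists F n, forall f, F <= f -> enum2 (scov th) f n = z.
Proof.
  induction z as [|a IHa b g IHg]; intros Hs.
  - exists 0, 0. intros f _. destruct f; reflexivity.
  - simpl in Hs. apply omax_lt in Hs as [Ha Hs]. apply omax_lt in Hs as [Hb Hg].
    destruct (IHa Ha) as [F1 [n1 H1]]. destruct (IHg Hg) as [F2 [n2 H2]].
    exists (S (max F1 F2)), (S (to_nat (Gs th b, to_nat (n1, n2)))).
    intros f Hf. destruct f as [|f]; [lia|]. cbn [enum2].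
    rewrite !cancel_of_to. rewrite H1 by lia. rewrite H2 by lia.
    rewrite scov_spec by exact Hb. reflexivity.
Qed.

Lemma enum_cover th : forall z : oterm W, olt (star z) th -> exists m, enum th m = z.
Proof.
  intros z Hz. destruct (enum2_cover th z Hz) as [F [n H]].
  exists (to_nat (F, n)). unfold enum. rewrite cancel_of_to. apply H. lia.
Qed.

Lemma Bnd : forall th : W, exists u, forall z, olt (star z) th -> olt (Theta X z) u.
Proof.
  intros th. destruct (bounded (fun m => Theta X (enum th m))) as [u Hu].
  exists u. intros z Hz. destruct (enum_cover th z Hz) as [m Hm]. rewrite <- Hm. apply Hu.
Qed.

Lemma minimal : forall (S : W -> Prop) x, S x -> exists m, S m /\ forall y, olt y m -> ~ S y.
Proof.
  intros S x Hx. apply NNPP. intros Hn.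
  assert (forall y, ~ S y).
  { intros y. induction y as [y IH] using (well_founded_ind (olt_wf W)).
    intros Sy. apply Hn. exists y. split; auto. }
  eapply H; eauto.
Qed.


Lemma Theta_exists (HX : club X) : forall xi, NF xi -> exists th, Theta_rel X xi th.
Proof.
  intros xi Hn. pose proof (NF_Acc xi Hn) as A. revert Hn.
  induction A as [xi _ IH]. intros Hn.
  assert (TS : forall z, NF z -> tlt z xi -> Theta_rel X z (Theta X z)).
  { intros z nz lz. unfold Theta. apply epsilon_spec. apply IH; [split|]; auto. }
  destruct HX as [Hcl Hunb].
  set (bnd := fun th : W => epsilon (inhabits ozero)
                (fun u => forall z, olt (star z) th -> olt (Theta X z) u)).
  assert (Hbnd : forall th z, olt (star z) th -> olt (Theta X z) (bnd th)).
  { intros th. unfold bnd. apply epsilon_spec. apply Bnd. }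
  set (nxt := fun th : W => epsilon (inhabits ozero)
                (fun x => X x /\ olt th x /\ olt (bnd th) x)).
  assert (Hnxt : forall th, X (nxt th) /\ olt th (nxt th) /\ olt (bnd th) (nxt th)).
  { intros th. unfold nxt. apply epsilon_spec.
    destruct (Hunb (omax th (bnd th))) as [x [Xx Lx]]. apply omax_lt in Lx.
    exists x; tauto. }
  set (sq := fun n => Nat.iter n nxt (star xi)).
  assert (sqS : forall n, sq (S n) = nxt (sq n)) by reflexivity.
  destruct (bounded sq) as [u0 Hu0].
  destruct (minimal (fun u => forall n, olt (sq n) u \/ sq n = u) u0) as [u [Hu Hmin]].
  { intros n; left; apply Hu0. }
  assert (Hlt : forall n, olt (sq n) u).
  { intros n. destruct (Hu (S n)) as [h|h]; rewrite sqS in h;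
    destruct (Hnxt (sq n)) as (_ & h2 & _).
    - eapply olt_trans; eauto.
    - rewrite <- h. exact h2. }
  assert (Hbelow : forall a, olt a u -> exists n, olt a (sq n)).
  { intros a ha. apply Hmin in ha. apply not_all_ex_not in ha as [n hn].
    exists n. destruct (olt_total _ a (sq n)) as [l|[l|l]]; auto; exfalso; apply hn; auto. }
  assert (Su : X u /\ olt (star xi) u /\
     forall z, NF z -> tlt z xi -> olt (star z) u -> olt (Theta X z) u).
  { split; [|split].
    - apply Hcl. exists (sq 0). apply Hlt.
      intros a ha. destruct (Hbelow a ha) as [n hn].
      exists (sq (S n)). rewrite sqS. destruct (Hnxt (sq n)) as (h1 & h2 & _).
      split; [exact h1|split]. eapply olt_trans; eauto. rewrite <- sqS. apply Hlt.
    - apply (Hlt 0).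
    - intros z nz lz sz. destruct (Hbelow _ sz) as [n hn].
      apply (Hbnd _ _) in hn. destruct (Hnxt (sq n)) as (_ & _ & h3).
      eapply olt_trans; [exact hn|]. eapply olt_trans; [exact h3|].
      rewrite <- sqS. apply Hlt. }
  destruct (minimal (fun u => X u /\ olt (star xi) u /\
     forall z, NF z -> tlt z xi -> olt (star z) u -> olt (Theta X z) u) u Su)
    as [th [[Xth [sth cth]] Hm]].
  exists th. constructor; auto.
  - intros z nz lz sz. exists (Theta X z). split; auto.
  - intros th' X' s' l'. apply Hm in l'.
    assert (h : ~ forall z, NF z -> tlt z xi -> olt (star z) th' -> olt (Theta X z) th')
      by (intros h; apply l'; auto).
    apply not_all_ex_not in h as [z hz].
    apply imply_to_and in hz as [nz hz]. apply imply_to_and in hz as [lz hz].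
    apply imply_to_and in hz as [sz hz].
    exists z. split; [|split; [|split]]; auto. exists (Theta X z). split; auto.
Qed.

End S.

Theorem lemma3p2 (W : Omega1) (X : W -> Prop)
  (HX : club X) (H0 : ~ X ozero)
  (alpha beta : oterm W) (Ha : NF alpha) (Hb : NF beta)
  (Hab : tlt alpha beta) :
  olt (Theta X alpha) (Theta X beta) <-> olt (star alpha) (Theta X beta).
Proof.
  assert (TA : Theta_rel X alpha (Theta X alpha)).
  { unfold Theta. apply epsilon_spec. apply Theta_exists; auto. }
  assert (TB : Theta_rel X beta (Theta X beta)).
  { unfold Theta. apply epsilon_spec. apply Theta_exists; auto. }
  split.
  - intros h. destruct TA as [? ? _ sa _ _]. eapply olt_trans; eauto.
  - intros h. destruct TB as [? ? _ _ c3 _].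
    destruct (c3 alpha Ha Hab h) as [t [Ht lt]].
    rewrite (Theta_uniq _ _ _ _ TA _ Ht). exact lt.
Qed.
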